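(* Let $p\ge1$ and $n>p$ be integers, and let $\Lambda\in\mathbb R$. Let $z\not\equiv0$ be a real even eigenfunction of order $n$ with eigenvalue $\Lambda$. Then: 1. $\Lambda>0$. 2. Put $\lambda^2=\Lambda^{1/p}>0$, and for $-1\le k\le n-p-1$ set $$h^k=(-1)^kL^{2n-2k-2}(\Lambda)z.$$ In particular $h^{-1}=-L^{2n}(\Lambda)z=0$ and $h^0=c$ is the constant $L^{2n-2}(\Lambda)z$. Then for every integer $k$ with $0\le k\le n-p-1$, $$(-1)^{k-1}\int_{-1}^1 z\,h^{k-1}\,dx-(-1)^k\lambda^2\int_{-1}^1 z\,h^{k}\,dx>0 .$$ 3. In particular (the case $k=0$), $c\int_{-1}^1 z\,dx<0$.
   Context: Fix an integer $p\ge1$. For an integer $k\ge p$ and real $\Lambda$, the differential operator on $[-1,1]$ is $$L^{2k}(\Lambda)=(-1)^k\frac{d^{2k}}{dx^{2k}}-\Lambda(-1)^{k-p}\frac{d^{2k-2p}}{dx^{2k-2p}}.$$ A real function $z\in C^{2n}[-1,1]$, $z\not\equiv0$, is an eigenfunction of order $n$ with eigenvalue $\Lambda$ if: - $L^{2n}(\Lambda)z=0$ on $[-1,1]$, and - $z^{(j)}(\pm1)=0$ for $j=0,\dots,n-1$. *)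

(* Defs.v *)
From Stdlib Require Import Reals ZArith Lra.
Open Scope R_scope.

Definition derive_within (a b : R) (f f' : R -> R) : Prop :=
  forall x, a <= x <= b -> forall eps, 0 < eps ->
    exists delta, 0 < delta /\
      forall h, h <> 0 -> Rabs h < delta -> a <= x + h <= b ->
        Rabs ((f (x + h) - f x) / h - f' x) < eps.

Definition cont_within (a b : R) (f : R -> R) : Prop :=
  forall x, a <= x <= b -> forall eps, 0 < eps ->
    exists delta, 0 < delta /\
      forall y, a <= y <= b -> Rabs (y - x) < delta -> Rabs (f y - f x) < eps.

Definition Cm_derivs (m : nat) (z : R -> R) (D : nat -> R -> R) : Prop :=
  (forall x, D 0%nat x = z x) /\
  (forall j, (j < m)%nat -> derive_within (-1) 1 (D j) (D (S j))) /\
  cont_within (-1) 1 (D m).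

(* (L^{2m}(Lam) z)(x) = (-1)^m z^(2m)(x) - Lam (-1)^(m-p) z^(2m-2p)(x), m >= p,
   with D the family of derivatives of z. *)
Definition Lop (p : nat) (Lam : R) (D : nat -> R -> R) (m : nat) (x : R) : R :=
  (-1) ^ m * D (2 * m)%nat x - Lam * (-1) ^ (m - p) * D (2 * m - 2 * p)%nat x.

Definition eigen_with (p n : nat) (Lam : R) (z : R -> R) (D : nat -> R -> R) : Prop :=
  Cm_derivs (2 * n) z D /\
  (forall x, -1 <= x <= 1 -> Lop p Lam D n x = 0) /\
  (forall j, (j < n)%nat -> D j (-1) = 0 /\ D j 1 = 0) /\
  (exists x, -1 <= x <= 1 /\ z x <> 0).

Definition is_eigenfunction (p n : nat) (Lam : R) (z : R -> R) : Prop :=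
  exists D, eigen_with p n Lam z D.

Definition is_even_on_I (z : R -> R) : Prop :=
  forall x, -1 <= x <= 1 -> z (- x) = z x.

Definition hfun (p n : nat) (Lam : R) (D : nat -> R -> R) (k : Z) (x : R) : R :=
  powerRZ (-1) k * Lop p Lam D (Z.to_nat (Z.of_nat n - k - 1)) x.

(* Main.v *)
Require Import Defs.
From Stdlib Require Import Reals ZArith.
From Stdlib Require Import Lra Lia Psatz.
From Coquelicot Require Import Coquelicot.
Open Scope R_scope.


Definition clamp (y:R) := Rmax (-1) (Rmin 1 y).
Lemma clamp_id y : -1 <= y <= 1 -> clamp y = y.
Proof. intros. unfold clamp, Rmax, Rmin; repeat destruct Rle_dec; lra. Qed.
Lemma clamp_in y : -1 <= clamp y <= 1.
Proof. unfold clamp, Rmax, Rmin; repeat destruct Rle_dec; lra. Qed.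
Lemma clamp_lip x y : Rabs (clamp x - clamp y) <= Rabs (x - y).
Proof. unfold clamp, Rmax, Rmin; repeat destruct Rle_dec; unfold Rabs;
  repeat destruct Rcase_abs; lra. Qed.

Definition cw f := cont_within (-1) 1 f.

Lemma cw_cont f : cw f -> forall x, continuity_pt (fun y => f (clamp y)) x.
Proof.
  intros H x. unfold continuity_pt, continue_in, limit1_in, limit_in, D_x, no_cond; simpl.
  intros eps He. destruct (H (clamp x) (clamp_in x) eps He) as [d [dpos Hd]].
  exists d; split; auto. intros y [_ Hy]. unfold R_dist in *.
  apply Hd; [apply clamp_in | eapply Rle_lt_trans; [apply clamp_lip|exact Hy]].
Qed.

Lemma cont_cw f g : (forall x, -1<=x<=1 -> continuity_pt g x) ->
  (forall x, -1<=x<=1 -> g x = f x) -> cw f.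
Proof.
  intros H E x Hx eps He.
  assert (H' := H x Hx).
  unfold continuity_pt, continue_in, limit1_in, limit_in, D_x, no_cond in H'; simpl in H'.
  destruct (H' eps He) as [a [apos Ha]]. exists a; split; auto.
  intros y Hy Hyx. destruct (Req_dec y x) as [->|Hne].
  { rewrite Rminus_diag, Rabs_R0; auto. }
  rewrite <- (E y Hy), <- (E x Hx). apply (Ha y). split. split; auto.
  unfold R_dist. exact Hyx.
Qed.

Lemma cw_mult f g : cw f -> cw g -> cw (fun x => f x * g x).
Proof.
  intros Hf Hg. apply (cont_cw _ (fun y => f (clamp y) * g (clamp y))).
  - intros; apply continuity_pt_mult; apply cw_cont; auto.
  - intros; rewrite clamp_id; auto.
Qed.
Lemma cw_plus f g : cw f -> cw g -> cw (fun x => f x + g x).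
Proof.
  intros Hf Hg. apply (cont_cw _ (fun y => f (clamp y) + g (clamp y))).
  - intros; apply continuity_pt_plus; apply cw_cont; auto.
  - intros; rewrite clamp_id; auto.
Qed.
Lemma cw_const c : cw (fun _ => c).
Proof. intros x Hx eps He. exists 1; split; [lra|]. intros. rewrite Rminus_diag, Rabs_R0; auto. Qed.
Lemma cw_scal c f : cw f -> cw (fun x => c * f x).
Proof. intros; apply cw_mult; auto; apply cw_const. Qed.
Lemma cw_ext f g : cw f -> (forall x, -1<=x<=1 -> f x = g x) -> cw g.
Proof.
  intros Hf E. apply (cont_cw _ (fun y => f (clamp y))).
  - intros; apply cw_cont; auto.
  - intros; rewrite clamp_id; auto.
Qed.

Lemma cw_ex f a b : -1<=a -> a<=b -> b<=1 -> cw f -> ex_RInt f a b.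
Proof.
  intros Ha Hab Hb Hf. apply (ex_RInt_ext (fun y => f (clamp y))).
  - intros x Hx. rewrite Rmin_left in Hx by lra. rewrite Rmax_right in Hx by lra.
    rewrite clamp_id; auto; lra.
  - apply (@ex_RInt_continuous R_CompleteNormedModule). intros; apply continuity_pt_filterlim; apply cw_cont; auto.
Qed.

Lemma ftc G g a b : -1<=a -> a<=b -> b<=1 ->
  (forall x, a<=x<=b -> derivable_pt_lim G x (g x)) -> cw g ->
  RInt g a b = G b - G a.
Proof.
  intros Ha Hab Hb HD Hg. apply is_RInt_unique.
  apply (is_RInt_ext (fun y => g (clamp y))).
  - intros x Hx. rewrite Rmin_left in Hx by lra. rewrite Rmax_right in Hx by lra.
    rewrite clamp_id; auto; lra.
  - apply (@is_RInt_derive R_CompleteNormedModule G (fun y => g (clamp y))).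
    + intros x Hx. rewrite Rmin_left in Hx by lra. rewrite Rmax_right in Hx by lra.
      rewrite clamp_id by lra. apply is_derive_Reals. auto.
    + intros; apply continuity_pt_filterlim; apply cw_cont; auto.
Qed.

Lemma const_lem G a b : -1<=a -> a<=b -> b<=1 ->
  (forall x, a<=x<=b -> derivable_pt_lim G x 0) -> G b = G a.
Proof.
  intros Ha Hab Hb HD.
  assert (H := ftc G (fun _ => 0) a b Ha Hab Hb HD (cw_const 0)).
  rewrite RInt_const in H. unfold scal in H; simpl in H. unfold mult in H; simpl in H.
  lra.
Qed.

Lemma RInt_lin2 f g a b c d : ex_RInt f a b -> ex_RInt g a b ->
  RInt (fun x => c * f x + d * g x) a b = c * RInt f a b + d * RInt g a b.
Proof.
  intros Hf Hg. apply is_RInt_unique.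
  apply (is_RInt_plus (fun x => c * f x) (fun x => d * g x)).
  - apply (is_RInt_scal f a b c). apply (@RInt_correct R_CompleteNormedModule); auto.
  - apply (is_RInt_scal g a b d). apply (@RInt_correct R_CompleteNormedModule); auto.
Qed.

Ltac toR := match goal with |- ?a = ?b => change (@eq R a b) end.

Definition ext (f f' : R -> R) x :=
  if Rlt_dec x (-1) then f (-1) + f' (-1) * (x+1)
  else if Rlt_dec 1 x then f 1 + f' 1 * (x-1) else f x.

Lemma ext_in f f' y : -1<=y<=1 -> ext f f' y = f y.
Proof. intros; unfold ext; destruct Rlt_dec; [lra|]; destruct Rlt_dec; [lra|]; auto. Qed.

Lemma dw_ext f f' : derive_within (-1) 1 f f' ->
  forall x, -1<=x<=1 -> derivable_pt_lim (ext f f') x (f' x).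
Proof.
  intros H x Hx eps He. destruct (H x Hx eps He) as [d [dpos Hd]].
  destruct (Req_dec x (-1)) as [Hm|Hm].
  - subst x. assert (P : 0 < Rmin d 2) by (apply Rmin_glb_lt; lra).
    exists (mkposreal _ P). simpl. intros h hne hlt.
    assert (h1 : Rabs h < d) by (eapply Rlt_le_trans; [exact hlt|apply Rmin_l]).
    assert (h2 : Rabs h < 2) by (eapply Rlt_le_trans; [exact hlt|apply Rmin_r]).
    rewrite (ext_in f f' (-1)) by lra.
    destruct (Rlt_dec h 0).
    + unfold ext at 1. destruct Rlt_dec; [|lra].
      replace ((f (-1) + f' (-1) * (-1 + h + 1) - f (-1)) / h - f' (-1)) with 0
        by (field; auto). rewrite Rabs_R0; auto.
    + assert (0 < h) by lra. rewrite Rabs_right in h2 by lra.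
      rewrite ext_in by lra. apply Hd; auto; lra.
  - destruct (Req_dec x 1) as [Hp|Hp].
    + subst x. assert (P : 0 < Rmin d 2) by (apply Rmin_glb_lt; lra).
      exists (mkposreal _ P). simpl. intros h hne hlt.
      assert (h1 : Rabs h < d) by (eapply Rlt_le_trans; [exact hlt|apply Rmin_l]).
      assert (h2 : Rabs h < 2) by (eapply Rlt_le_trans; [exact hlt|apply Rmin_r]).
      rewrite (ext_in f f' 1) by lra.
      destruct (Rlt_dec 0 h).
      * unfold ext at 1. destruct Rlt_dec; [lra|]. destruct Rlt_dec; [|lra].
        replace ((f 1 + f' 1 * (1 + h - 1) - f 1) / h - f' 1) with 0
          by (field; auto). rewrite Rabs_R0; auto.
      * assert (h < 0) by lra. rewrite Rabs_left in h2 by lra.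
        rewrite ext_in by lra. apply Hd; auto; lra.
    + assert (P : 0 < Rmin d (Rmin (x+1) (1-x))).
      { apply Rmin_glb_lt; [lra|apply Rmin_glb_lt; lra]. }
      exists (mkposreal _ P). simpl. intros h hne hlt.
      assert (h1 : Rabs h < d) by (eapply Rlt_le_trans; [exact hlt|apply Rmin_l]).
      assert (h2 : Rabs h < Rmin (x+1) (1-x)) by (eapply Rlt_le_trans; [exact hlt|apply Rmin_r]).
      assert (h3 : Rabs h < x+1) by (eapply Rlt_le_trans; [exact h2|apply Rmin_l]).
      assert (h4 : Rabs h < 1-x) by (eapply Rlt_le_trans; [exact h2|apply Rmin_r]).
      assert (-1 <= x+h <= 1).
      { unfold Rabs in *; destruct Rcase_abs; lra. }
      rewrite !ext_in by lra. apply Hd; auto.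
Qed.

Lemma dl_cont G x l : derivable_pt_lim G x l -> continuity_pt G x.
Proof. intros H. apply (derivable_continuous_pt G x (exist _ l H)). Qed.

Lemma dw_cw f f' : derive_within (-1) 1 f f' -> cw f.
Proof.
  intros H. apply (cont_cw _ (ext f f')).
  - intros x Hx; eapply dl_cont; apply dw_ext; eauto.
  - apply ext_in.
Qed.

Lemma eq_of_small a b : (forall eps, 0 < eps -> Rabs (a - b) < 2 * eps) -> a = b.
Proof.
  intros H. destruct (Req_dec a b); auto.
  assert (0 < Rabs (a-b)) by (apply Rabs_pos_lt; lra).
  specialize (H (Rabs (a-b) / 4)). lra.
Qed.

Lemma dw_unique f f1 f2 x : derive_within (-1) 1 f f1 -> derive_within (-1) 1 f f2 ->
  -1<=x<=1 -> f1 x = f2 x.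
Proof.
  intros H1 H2 Hx. apply eq_of_small. intros eps He.
  destruct (H1 x Hx eps He) as [d1 [d1p Hd1]].
  destruct (H2 x Hx eps He) as [d2 [d2p Hd2]].
  assert (P : 0 < Rmin (Rmin d1 d2) 1) by (repeat apply Rmin_glb_lt; lra).
  set (m := Rmin (Rmin d1 d2) 1) in *.
  assert (m1 : m <= d1) by (unfold m; eapply Rle_trans; [apply Rmin_l|apply Rmin_l]).
  assert (m2 : m <= d2) by (unfold m; eapply Rle_trans; [apply Rmin_l|apply Rmin_r]).
  assert (m3 : m <= 1) by (unfold m; apply Rmin_r).
  set (h := if Rle_dec x 0 then m/2 else - (m/2)).
  assert (hne : h <> 0) by (unfold h; destruct Rle_dec; lra).
  assert (habs : Rabs h < m) by (unfold h; destruct Rle_dec; [rewrite Rabs_right|rewrite Rabs_left]; lra).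
  assert (hin : -1 <= x + h <= 1) by (unfold h; destruct Rle_dec; lra).
  specialize (Hd1 h hne ltac:(lra) hin). specialize (Hd2 h hne ltac:(lra) hin).
  set (q := (f (x + h) - f x) / h) in *.
  replace (f1 x - f2 x) with (- (q - f1 x) + (q - f2 x)) by ring.
  eapply Rle_lt_trans; [apply Rabs_triang|]. rewrite Rabs_Ropp. lra.
Qed.

Lemma dw_reflect f f' g s : derive_within (-1) 1 f f' -> Rabs s = 1 ->
  (forall x, -1<=x<=1 -> g x = s * f (-x)) ->
  derive_within (-1) 1 g (fun x => - s * f' (-x)).
Proof.
  intros H Hs E x Hx eps He.
  destruct (H (-x) ltac:(lra) eps He) as [d [dp Hd]].
  exists d; split; auto. intros h hne hlt hin.
  rewrite (E _ hin), (E _ Hx).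
  assert (Hq := Hd (-h) ltac:(lra) ltac:(rewrite Rabs_Ropp; auto) ltac:(lra)).
  replace ((s * f (- (x + h)) - s * f (- x)) / h - - s * f' (- x))
    with (- s * ((f (- x + - h) - f (- x)) / - h - f' (- x))).
  - rewrite Rabs_mult, Rabs_Ropp, Hs. lra.
  - replace (- (x+h)) with (-x + -h) by ring. field; auto.
Qed.

Lemma pos_int g : cw g -> (forall x, -1<=x<=1 -> 0 <= g x) ->
  (exists x0, -1<=x0<=1 /\ 0 < g x0) -> 0 < RInt g (-1) 1.
Proof.
  intros Hg Hnn [x0 [Hx0 Hp]].
  destruct (Hg x0 Hx0 (g x0 / 2) ltac:(lra)) as [d [dp Hd]].
  set (c := Rmax (-1) (x0 - d/2)). set (e := Rmin 1 (x0 + d/2)).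
  assert (c1 : -1 <= c) by apply Rmax_l.
  assert (c2 : c <= x0) by (apply Rmax_lub; lra).
  assert (e1 : e <= 1) by apply Rmin_l.
  assert (e2 : x0 <= e) by (apply Rmin_glb; lra).
  assert (c3 : x0 - d/2 <= c) by apply Rmax_r.
  assert (e3 : e <= x0 + d/2) by apply Rmin_r.
  assert (ce : c < e).
  { unfold c, e, Rmax, Rmin; repeat destruct Rle_dec; lra. }
  rewrite <- (RInt_Chasles g (-1) c 1) by (apply cw_ex; auto; lra).
  rewrite <- (RInt_Chasles g c e 1) by (apply cw_ex; auto; lra).
  unfold plus; simpl.
  assert (0 <= RInt g (-1) c) by (apply RInt_ge_0; [lra|apply cw_ex; auto; lra|intros; apply Hnn; lra]).
  assert (0 <= RInt g e 1) by (apply RInt_ge_0; [lra|apply cw_ex; auto; lra|intros; apply Hnn; lra]).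
  assert (RInt (fun _ => g x0 / 2) c e <= RInt g c e).
  { apply RInt_le; [lra| apply cw_ex; auto using cw_const; lra | apply cw_ex; auto; lra |].
    intros x Hx. assert (Hxx : Rabs (x - x0) < d) by (unfold Rabs; destruct Rcase_abs; lra).
    specialize (Hd x ltac:(lra) Hxx). unfold Rabs in Hd; destruct Rcase_abs in Hd; lra. }
  rewrite RInt_const in H1. unfold scal in H1; simpl in H1; unfold mult in H1; simpl in H1.
  assert (0 < (e - c) * (g x0 / 2)) by (apply Rmult_lt_0_compat; lra).
  lra.
Qed.

Lemma dl_ext G x l l' : derivable_pt_lim G x l -> l = l' -> derivable_pt_lim G x l'.
Proof. intros; subst; auto. Qed.
Lemma dl_mult f g x a b : derivable_pt_lim f x a -> derivable_pt_lim g x b ->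
  derivable_pt_lim (fun y => f y * g y) x (a * g x + f x * b).
Proof. intros; apply (derivable_pt_lim_mult f g x a b); auto. Qed.
Lemma dl_plus f g x a b : derivable_pt_lim f x a -> derivable_pt_lim g x b ->
  derivable_pt_lim (fun y => f y + g y) x (a + b).
Proof. intros; apply (derivable_pt_lim_plus f g x a b); auto. Qed.
Lemma dl_scal c f x a : derivable_pt_lim f x a ->
  derivable_pt_lim (fun y => c * f y) x (c * a).
Proof. intros; apply (derivable_pt_lim_scal f c x a); auto. Qed.

Definition Hyps (M : nat) (D : nat -> R -> R) :=
  (forall j, (j < M)%nat -> derive_within (-1) 1 (D j) (D (S j))) /\ cont_within (-1) 1 (D M).

Lemma cwD M D j : Hyps M D -> (j <= M)%nat -> cw (D j).
Proof.
  intros [Hd Hc] Hj. destruct (Nat.eq_dec j M) as [->|Hne]; auto.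
  apply (dw_cw _ (D (S j))). apply Hd; lia.
Qed.

Definition E (D : nat -> R -> R) j := ext (D j) (D (S j)).

Lemma dE M D j x : Hyps M D -> (j < M)%nat -> -1<=x<=1 ->
  derivable_pt_lim (E D j) x (D (S j) x).
Proof. intros [Hd _] Hj Hx. apply dw_ext; auto. Qed.

Lemma E_in D j x : -1<=x<=1 -> E D j x = D j x.
Proof. apply ext_in. Qed.

Definition P (D : nat -> R -> R) i j : R := RInt (fun x => D i x * D j x) (-1) 1.

Lemma ibp M D i j : Hyps M D -> (i < M)%nat -> (j < M)%nat ->
  D i 1 * D j 1 = 0 -> D i (-1) * D j (-1) = 0 ->
  P D i (S j) = - P D (S i) j.
Proof.
  intros H Hi Hj B1 B2. unfold P.
  assert (F := ftc (fun x => E D i x * E D j x)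
     (fun x => 1 * (D (S i) x * D j x) + 1 * (D i x * D (S j) x)) (-1) 1
     ltac:(lra) ltac:(lra) ltac:(lra)).
  assert (F1 : RInt (fun x => 1 * (D (S i) x * D j x) + 1 * (D i x * D (S j) x)) (-1) 1 =
           E D i 1 * E D j 1 - E D i (-1) * E D j (-1)).
  { apply F.
    - intros x Hx. eapply dl_ext. apply dl_mult; apply (dE M); auto.
      rewrite !E_in by lra. ring.
    - apply cw_plus; apply cw_scal; apply cw_mult; apply (cwD M); auto; lia. }
  clear F.
  rewrite RInt_lin2 in F1.
  - rewrite (E_in D i 1), (E_in D j 1), (E_in D i (-1)), (E_in D j (-1)) in F1 by lra. lra.
  - apply cw_ex; try lra. apply cw_mult; apply (cwD M); auto; lia.
  - apply cw_ex; try lra. apply cw_mult; apply (cwD M); auto; lia.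
Qed.

Lemma down M D i : Hyps M D -> (i < M)%nat -> D i 1 = 0 ->
  (forall x, -1<=x<=1 -> D (S i) x = 0) -> forall x, -1<=x<=1 -> D i x = 0.
Proof.
  intros H Hi B Z x Hx.
  assert (C := const_lem (E D i) x 1 ltac:(lra) ltac:(lra) ltac:(lra)).
  rewrite !E_in in C by lra. rewrite <- C; auto.
  intros y Hy. eapply dl_ext. apply (dE M); auto; lra. apply Z; lra.
Qed.

Lemma zero_all M D n j : Hyps M D -> (n <= M)%nat ->
  (forall i, (i < n)%nat -> D i 1 = 0) -> (j <= n)%nat ->
  (forall x, -1<=x<=1 -> D j x = 0) -> forall x, -1<=x<=1 -> D 0%nat x = 0.
Proof.
  intros H Hn B. induction j; intros Hj Z; auto.
  apply IHj; [lia|]. apply (down M); auto; lia.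
Qed.

Lemma RInt_sc f a b c : ex_RInt f a b -> RInt (fun x => c * f x) a b = c * RInt f a b.
Proof. intros H. apply (@RInt_scal R_CompleteNormedModule f a b c H). Qed.

Lemma m1sq k : (-1)^k * (-1)^k = 1.
Proof. rewrite <- Rpow_mult_distr. replace (-1 * -1) with 1 by ring. apply pow1. Qed.


Definition N D j : R := P D j j.

Lemma hyps_of p n Lam z D : eigen_with p n Lam z D -> Hyps (2*n) D.
Proof. intros [[_ [Hd Hc]] _]. split; auto. Qed.

Lemma bnd p n Lam z D j : eigen_with p n Lam z D -> (j < n)%nat -> D j 1 = 0 /\ D j (-1) = 0.
Proof. intros [_ [_ [Hb _]]] Hj. destruct (Hb j Hj); auto. Qed.

Lemma zD p n Lam z D x : eigen_with p n Lam z D -> D 0%nat x = z x.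
Proof. intros [[H0 _] _]. auto. Qed.

Lemma P0 p n Lam z D m : eigen_with p n Lam z D -> (m <= n)%nat ->
  P D 0 (2*m) = (-1)^m * N D m.
Proof.
  intros He Hm. assert (H := hyps_of _ _ _ _ _ He).
  assert (G : forall i, (i <= m)%nat -> P D 0 (2*m) = (-1)^i * P D i (2*m - i)).
  { induction i; intros Hi.
    - rewrite pow_O. replace (2*m-0)%nat with (2*m)%nat by lia. ring.
    - rewrite IHi by lia. replace (2*m - i)%nat with (S (2*m - S i)) by lia.
      rewrite (ibp (2*n) D i (2*m - S i)); auto; try lia.
      + simpl; ring.
      + rewrite (proj1 (bnd _ _ _ _ _ i He ltac:(lia))); ring.
      + rewrite (proj2 (bnd _ _ _ _ _ i He ltac:(lia))); ring. }
  rewrite (G m) by lia. replace (2*m-m)%nat with m by lia. reflexivity.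
Qed.

Lemma cwL p n Lam z D m : eigen_with p n Lam z D -> (m <= n)%nat -> cw (Lop p Lam D m).
Proof.
  intros He Hm. assert (H := hyps_of _ _ _ _ _ He).
  apply (cw_ext (fun x => (-1)^m * D (2*m)%nat x + (- (Lam * (-1)^(m-p))) * D (2*m-2*p)%nat x)).
  - apply cw_plus; apply cw_scal; apply (cwD (2*n)); auto; lia.
  - intros; unfold Lop; ring.
Qed.

Lemma cwz p n Lam z D : eigen_with p n Lam z D -> cw z.
Proof.
  intros He. apply (cw_ext (D 0%nat)). apply (cwD (2*n)); [apply (hyps_of p n Lam z D He)|lia].
  intros; apply (zD p n Lam z D); auto.
Qed.

Lemma intzL p n Lam z D m : eigen_with p n Lam z D -> (p <= m <= n)%nat ->
  RInt (fun x => z x * Lop p Lam D m x) (-1) 1 = N D m - Lam * N D (m-p).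
Proof.
  intros He Hm. assert (H := hyps_of _ _ _ _ _ He).
  rewrite (RInt_ext _ (fun x => (-1)^m * (D 0%nat x * D (2*m)%nat x) +
     (- (Lam * (-1)^(m-p))) * (D 0%nat x * D (2*(m-p))%nat x))).
  - rewrite RInt_lin2.
    + change (RInt (fun x => D 0%nat x * D (2 * m)%nat x) (-1) 1) with (P D 0 (2*m)).
      change (RInt (fun x => D 0%nat x * D (2 * (m-p))%nat x) (-1) 1) with (P D 0 (2*(m-p))).
      rewrite (P0 p n Lam z D m), (P0 p n Lam z D (m-p)); auto; try lia.
      assert (A1 := m1sq m). assert (A2 := m1sq (m-p)).
      replace ((-1) ^ m * ((-1) ^ m * N D m)) with (((-1) ^ m * (-1) ^ m) * N D m) by ring.
      replace (- (Lam * (-1) ^ (m - p)) * ((-1) ^ (m - p) * N D (m - p))) with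
        (- Lam * ((-1) ^ (m - p) * (-1) ^ (m - p)) * N D (m - p)) by ring.
      rewrite A1, A2. match goal with |- ?a = ?b => change (@eq R a b) end. ring.
    + apply cw_ex; try lra. apply cw_mult; apply (cwD (2*n)); auto; lia.
    + apply cw_ex; try lra. apply cw_mult; apply (cwD (2*n)); auto; lia.
  - intros x _. unfold Lop. rewrite (zD p n Lam z D x He).
    replace (2*m - 2*p)%nat with (2*(m-p))%nat by lia. toR; ring.
Qed.

Lemma nonzero_wit p n Lam z D j : eigen_with p n Lam z D -> (j <= n)%nat ->
  exists x0, -1 <= x0 <= 1 /\ D j x0 <> 0.
Proof.
  intros He Hj. assert (H := hyps_of _ _ _ _ _ He).
  destruct (Classical_Prop.classic (exists x0, -1 <= x0 <= 1 /\ D j x0 <> 0)) as [W|W]; auto.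
  exfalso. assert (He' := He). destruct He' as [Hc [HL [Hb [x [Hx Hz]]]]].
  apply Hz. rewrite <- (zD p n Lam z D x He).
  apply (zero_all (2*n) D n j); auto; try lia.
  - intros i Hi. apply (Hb i Hi).
  - intros y Hy. destruct (Req_dec (D j y) 0); auto. exfalso; apply W; eauto.
Qed.

Lemma Npos p n Lam z D j : eigen_with p n Lam z D -> (j <= n)%nat -> 0 < N D j.
Proof.
  intros He Hj. assert (H := hyps_of _ _ _ _ _ He).
  apply pos_int.
  - apply cw_mult; apply (cwD (2*n)); auto; lia.
  - intros; nra.
  - destruct (nonzero_wit p n Lam z D j He Hj) as [x0 [Hx0 Hn]].
    exists x0; split; auto. assert (0 < D j x0 * D j x0) by nra. auto.
Qed.

Lemma Lam_pos p n Lam z D : (1 <= p)%nat -> (p < n)%nat -> eigen_with p n Lam z D -> 0 < Lam.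
Proof.
  intros Hp Hn He.
  assert (I0 := intzL p n Lam z D n He ltac:(lia)).
  rewrite (RInt_ext _ (fun _ => 0)) in I0.
  - rewrite RInt_const in I0. unfold scal in I0; simpl in I0; unfold mult in I0; simpl in I0.
    assert (A := Npos p n Lam z D n He ltac:(lia)).
    assert (B := Npos p n Lam z D (n-p) He ltac:(lia)). nra.
  - intros x Hx. destruct He as [_ [HL _]].
    rewrite Rmin_left in Hx by lra. rewrite Rmax_right in Hx by lra.
    rewrite HL by lra. toR; ring.
Qed.

Lemma Spos p n Lam z D mu j : eigen_with p n Lam z D -> 0 < mu -> (S (S j) <= n)%nat ->
  0 < N D (S (S j)) - 2 * mu * N D (S j) + mu^2 * N D j.
Proof.
  intros He Hmu Hj. assert (H := hyps_of _ _ _ _ _ He).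
  assert (cwk : forall k, (k <= n)%nat -> cw (D k)) by (intros; apply (cwD (2*n)); auto; lia).
  assert (Q : RInt (fun x => (D (S (S j)) x + mu * D j x) * (D (S (S j)) x + mu * D j x)) (-1) 1
              = N D (S (S j)) - 2 * mu * N D (S j) + mu^2 * N D j).
  { rewrite (RInt_ext _ (fun x => 1 * (1 * (D (S (S j)) x * D (S (S j)) x) + (2*mu) * (D j x * D (S (S j)) x))
                                + mu^2 * (D j x * D j x))).
    - rewrite RInt_lin2.
      + rewrite RInt_lin2.
        * change (RInt (fun x => D (S (S j)) x * D (S (S j)) x) (-1) 1) with (N D (S (S j))).
          change (RInt (fun x => D j x * D j x) (-1) 1) with (N D j).
          change (RInt (fun x => D j x * D (S (S j)) x) (-1) 1) with (P D j (S (S j))).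
          rewrite (ibp (2*n) D j (S j)); auto; try lia.
          -- unfold N. toR; ring.
          -- rewrite (proj1 (bnd _ _ _ _ _ j He ltac:(lia))); ring.
          -- rewrite (proj2 (bnd _ _ _ _ _ j He ltac:(lia))); ring.
        * apply cw_ex; try lra. apply cw_mult; apply cwk; lia.
        * apply cw_ex; try lra. apply cw_mult; apply cwk; lia.
      + apply cw_ex; try lra. apply cw_plus; apply cw_scal; apply cw_mult; apply cwk; lia.
      + apply cw_ex; try lra. apply cw_mult; apply cwk; lia.
    - intros; toR; ring. }
  rewrite <- Q. apply pos_int.
  - apply cw_mult; apply cw_plus; try apply cw_scal; apply cwk; lia.
  - intros; apply Rle_0_sqr.
  - destruct (Classical_Prop.classic (exists x0, -1 <= x0 <= 1 /\ D (S (S j)) x0 + mu * D j x0 <> 0))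
      as [[x0 [Hx0 Hn]]|W].
    + exists x0; split; auto. nra.
    + exfalso.
      assert (Z : forall x, -1<=x<=1 -> D (S (S j)) x + mu * D j x = 0).
      { intros y Hy. destruct (Req_dec (D (S (S j)) y + mu * D j y) 0); auto.
        exfalso; apply W; eauto. }
      set (G := fun x => E D (S j) x * E D (S j) x + mu * (E D j x * E D j x)).
      assert (Zj : forall x, -1<=x<=1 -> D j x = 0).
      { intros x Hx.
        assert (C := const_lem G x 1 ltac:(lra) ltac:(lra) ltac:(lra)).
        assert (C1 : G 1 = G x).
        { apply C. intros y Hy. unfold G. eapply dl_ext.
          - apply dl_plus. apply dl_mult; apply (dE (2*n)); auto; try lia; lra.
            apply dl_scal. apply dl_mult; apply (dE (2*n)); auto; try lia; lra.
          - rewrite !E_in by lra.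
            replace (D (S (S j)) y) with (- mu * D j y) by (specialize (Z y ltac:(lra)); lra).
            ring. }
        unfold G in C1. rewrite !E_in in C1 by lra.
        rewrite (proj1 (bnd _ _ _ _ _ j He ltac:(lia))),
          (proj1 (bnd _ _ _ _ _ (S j) He ltac:(lia))) in C1.
        destruct (Req_dec (D j x) 0) as [|Hne]; auto. exfalso.
        assert (0 < D j x * D j x) by (apply Rsqr_pos_lt; auto).
        assert (0 <= D (S j) x * D (S j) x) by apply Rle_0_sqr.
        assert (0 < mu * (D j x * D j x)) by (apply Rmult_lt_0_compat; auto).
        lra. }
      destruct (nonzero_wit p n Lam z D j He ltac:(lia)) as [x0 [Hx0 Hn]].
      apply Hn; auto.
Qed.

Lemma chain (Nf : nat -> R) (n p : nat) mu : 0 < mu -> (1 <= p)%nat ->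
  (forall j, (S (S j) <= n)%nat -> 0 < Nf (S (S j)) - 2 * mu * Nf (S j) + mu^2 * Nf j) ->
  forall m, (p <= m)%nat -> (S m <= n)%nat ->
  0 < (Nf (S m) - mu^p * Nf (S m - p)%nat) - mu * (Nf m - mu^p * Nf (m - p)%nat).
Proof.
  intros Hmu Hp HS.
  set (a := fun j => Nf (S j) - mu * Nf j).
  assert (S1 : forall k, (S (S k) <= n)%nat -> a (S k) > mu * a k).
  { intros k Hk. unfold a. assert (X := HS k Hk). nra. }
  assert (A : forall t k, (S (k + S t) <= n)%nat -> a (k + S t)%nat > mu^(S t) * a k).
  { induction t; intros k Hk.
    - replace (k + 1)%nat with (S k) by lia. simpl. rewrite Rmult_1_r. apply S1; lia.
    - replace (k + S (S t))%nat with (S k + S t)%nat by lia.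
      assert (X := IHt (S k) ltac:(lia)).
      assert (Y := S1 k ltac:(lia)).
      assert (0 < mu ^ S t) by (apply pow_lt; auto).
      replace (mu ^ S (S t) * a k) with (mu ^ S t * (mu * a k)) by (simpl; ring).
      nra. }
  intros m Hm Hn.
  assert (X := A (p-1)%nat (m-p)%nat ltac:(lia)).
  replace (m - p + S (p - 1))%nat with m in X by lia.
  replace (S (p-1)) with p in X by lia.
  replace (S m - p)%nat with (S (m-p)) by lia.
  unfold a in X. lra.
Qed.

Lemma parity p n Lam z D : eigen_with p n Lam z D -> is_even_on_I z ->
  forall j, (j <= 2*n)%nat -> forall x, -1<=x<=1 -> D j (-x) = (-1)^j * D j x.
Proof.
  intros He Hev. assert (H := hyps_of _ _ _ _ _ He). destruct H as [Hd Hc].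
  induction j; intros Hj x Hx.
  - rewrite !(zD p n Lam z D _ He). rewrite Hev by auto. rewrite pow_O; ring.
  - assert (R := dw_reflect (D j) (D (S j)) (D j) ((-1)^j) (Hd j ltac:(lia)) (pow_1_abs j)).
    assert (R' : derive_within (-1) 1 (D j) (fun x => - (-1)^j * D (S j) (-x))).
    { apply R. intros y Hy. assert (Y := IHj ltac:(lia) (-y) ltac:(lra)).
      rewrite Ropp_involutive in Y. exact Y. }
    assert (U := dw_unique (D j) (D (S j)) _ (-x) (Hd j ltac:(lia)) R' ltac:(lra)).
    simpl in U. rewrite Ropp_involutive in U. rewrite U. simpl. ring.
Qed.

Lemma pm1 k : (1 <= k)%nat -> (-1)^k = - (-1)^(k-1).
Proof. intros Hk; destruct k; [lia|]; simpl; rewrite Nat.sub_0_r; ring. Qed.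

Lemma odd_zero p n Lam z D i : eigen_with p n Lam z D -> is_even_on_I z ->
  (S (2*i) <= 2*n)%nat -> D (S (2*i)) 0 = 0.
Proof.
  intros He Hev Hi. assert (X := parity p n Lam z D He Hev (S (2*i)) Hi 0 ltac:(lra)).
  rewrite pow_1_odd, Ropp_0 in X. lra.
Qed.

Lemma hconst p n Lam z D : (1 <= p)%nat -> (p < n)%nat -> eigen_with p n Lam z D ->
  is_even_on_I z -> forall x, -1<=x<=1 -> Lop p Lam D (n-1) x = Lop p Lam D (n-1) 1.
Proof.
  intros Hp Hn He Hev.
  assert (H := hyps_of _ _ _ _ _ He).
  set (a1 := (-1)^(n-1)). set (b1 := Lam * (-1)^(n-1-p)).
  set (i1 := S (2*(n-1))). set (i2 := S (2*(n-1-p))).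
  set (R := fun x => a1 * E D i1 x + (-b1) * E D i2 x).
  assert (HR : forall x, -1<=x<=1 -> R 1 = R x).
  { intros x Hx. apply const_lem; try lra. intros y Hy.
    eapply dl_ext.
    - apply dl_plus; apply dl_scal; apply (dE (2*n)); auto; unfold i1, i2; try lia; lra.
    - destruct He as [_ [HL _]]. assert (L := HL y ltac:(lra)). unfold Lop in L.
      replace (S i1) with (2*n)%nat by (unfold i1; lia).
      replace (S i2) with (2*n - 2*p)%nat by (unfold i2; lia).
      unfold a1, b1. rewrite (pm1 n) in L by lia. rewrite (pm1 (n-p)) in L by lia.
      replace (n-p-1)%nat with (n-1-p)%nat in L by lia. lra. }
  assert (R0 : R 0 = 0).
  { unfold R. rewrite !E_in by lra. unfold i1, i2.
    rewrite (odd_zero p n Lam z D (n-1)), (odd_zero p n Lam z D (n-1-p)); auto; try lia. ring. }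
  set (Q := fun x => a1 * E D (2*(n-1)) x + (-b1) * E D (2*(n-1) - 2*p) x).
  assert (HQ : forall x, -1<=x<=1 -> Q 1 = Q x).
  { intros x Hx. apply const_lem; try lra. intros y Hy.
    eapply dl_ext.
    - apply dl_plus; apply dl_scal; apply (dE (2*n)); auto; try lia; lra.
    - replace (S (2*(n-1))) with i1 by (unfold i1; lia).
      replace (S (2*(n-1) - 2*p)) with i2 by (unfold i2; lia).
      assert (X : R y = 0) by (rewrite <- (HR y) by lra; rewrite (HR 0) by lra; auto).
      unfold R in X. rewrite !E_in in X by lra. lra. }
  intros x Hx. assert (X := HQ x Hx). unfold Q in X. rewrite !E_in in X by lra.
  unfold Lop. unfold a1, b1 in X. lra.
Qed.

Lemma pRZ_sq k : powerRZ (-1) k * powerRZ (-1) k = 1.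
Proof.
  destruct k; simpl.
  - ring.
  - apply m1sq.
  - rewrite <- Rinv_mult, m1sq. apply Rinv_1.
Qed.

Lemma In0 p n Lam z D : (p < n)%nat -> eigen_with p n Lam z D ->
  N D n - Lam * N D (n-p) = 0.
Proof.
  intros Hn He.
  assert (I0 := intzL p n Lam z D n He ltac:(lia)).
  rewrite (RInt_ext _ (fun _ => 0)) in I0.
  - rewrite RInt_const in I0. unfold scal in I0; simpl in I0; unfold mult in I0; simpl in I0.
    lra.
  - intros x Hx. destruct He as [_ [HL _]].
    rewrite Rmin_left in Hx by lra. rewrite Rmax_right in Hx by lra.
    rewrite HL by lra. toR; ring.
Qed.

Theorem mainTheorem4 (p n : nat) (Lam : R) (z : R -> R) (D : nat -> R -> R) :
  (1 <= p)%nat -> (p < n)%nat ->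
  eigen_with p n Lam z D -> is_even_on_I z ->
  0 < Lam /\
  (forall x, -1 <= x <= 1 -> hfun p n Lam D (-1) x = 0) /\
  (exists c, forall x, -1 <= x <= 1 -> hfun p n Lam D 0 x = c) /\
  (forall k : Z, (0 <= k <= Z.of_nat n - Z.of_nat p - 1)%Z ->
     exists (pr1 : Riemann_integrable (fun x => z x * hfun p n Lam D (k - 1) x) (-1) 1)
            (pr2 : Riemann_integrable (fun x => z x * hfun p n Lam D k x) (-1) 1),
       powerRZ (-1) (k - 1) * RiemannInt pr1
         - powerRZ (-1) k * Rpower Lam (/ INR p) * RiemannInt pr2 > 0) /\
  (forall c : R, (forall x, -1 <= x <= 1 -> Lop p Lam D (n - 1) x = c) ->
     exists pr : Riemann_integrable z (-1) 1, c * RiemannInt pr < 0).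
Proof.
  intros Hp Hn He Hev.
  assert (HL0 := Lam_pos p n Lam z D Hp Hn He).
  set (mu := Rpower Lam (/ INR p)).
  assert (Hmu : 0 < mu) by (unfold mu, Rpower; apply exp_pos).
  assert (Hmp : mu^p = Lam).
  { rewrite <- Rpower_pow by auto. unfold mu. rewrite Rpower_mult, Rinv_l.
    - apply Rpower_1; auto.
    - apply not_0_INR; lia. }
  assert (Key : forall m, (p <= m)%nat -> (S m <= n)%nat ->
    0 < (N D (S m) - Lam * N D (S m - p)%nat) - mu * (N D m - Lam * N D (m - p)%nat)).
  { intros m Hm1 Hm2. rewrite <- Hmp. apply (chain (N D) n p mu); auto.
    intros j Hj. apply (Spos p n Lam z D mu j He Hmu Hj). }
  assert (Hz : cw z) by (apply (cwz p n Lam z D He)).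
  split; [auto|]. split.
  { intros x Hx. unfold hfun.
    replace (Z.of_nat n - -1 - 1)%Z with (Z.of_nat n) by lia. rewrite Nat2Z.id.
    destruct He as [_ [HL _]]. rewrite HL by auto. ring. }
  split.
  { exists (Lop p Lam D (n-1) 1). intros x Hx. unfold hfun.
    replace (Z.of_nat n - 0 - 1)%Z with (Z.of_nat (n-1)) by lia. rewrite Nat2Z.id.
    simpl powerRZ. rewrite Rmult_1_l. apply (hconst p n Lam z D); auto. }
  split.
  - intros k Hk.
    set (kk := Z.to_nat k).
    assert (Ek : k = Z.of_nat kk) by (unfold kk; rewrite Z2Nat.id; lia).
    set (m := (n - kk - 1)%nat).
    assert (T1 : Z.to_nat (Z.of_nat n - (k-1) - 1) = S m).
    { replace (Z.of_nat n - (k-1) - 1)%Z with (Z.of_nat (S m)) by (unfold m; lia).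
      apply Nat2Z.id. }
    assert (T0 : Z.to_nat (Z.of_nat n - k - 1) = m).
    { replace (Z.of_nat n - k - 1)%Z with (Z.of_nat m) by (unfold m; lia).
      apply Nat2Z.id. }
    assert (Hm1 : (p <= m)%nat) by (unfold m; lia).
    assert (Hm2 : (S m <= n)%nat) by (unfold m; lia).
    assert (cw1 : cw (fun x => z x * hfun p n Lam D (k - 1) x)).
    { unfold hfun. rewrite T1. apply cw_mult; auto. apply cw_scal. apply (cwL p n Lam z D); auto. }
    assert (cw0 : cw (fun x => z x * hfun p n Lam D k x)).
    { unfold hfun. rewrite T0. apply cw_mult; auto. apply cw_scal. apply (cwL p n Lam z D); auto; lia. }
    exists (ex_RInt_Reals_0 _ _ _ (cw_ex _ (-1) 1 ltac:(lra) ltac:(lra) ltac:(lra) cw1)).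
    exists (ex_RInt_Reals_0 _ _ _ (cw_ex _ (-1) 1 ltac:(lra) ltac:(lra) ltac:(lra) cw0)).
    rewrite <- !RInt_Reals.
    assert (V1 : RInt (fun x => z x * hfun p n Lam D (k - 1) x) (-1) 1 =
              powerRZ (-1) (k-1) * (N D (S m) - Lam * N D (S m - p)%nat)).
    { unfold hfun. rewrite T1.
      rewrite (RInt_ext _ (fun x => powerRZ (-1) (k-1) * (z x * Lop p Lam D (S m) x)))
        by (intros; toR; ring).
      rewrite RInt_sc.
      - rewrite intzL with (p := p) (n := n) (z := z); auto.
      - apply cw_ex; try lra. apply cw_mult; auto. apply (cwL p n Lam z D); auto. }
    assert (V0 : RInt (fun x => z x * hfun p n Lam D k x) (-1) 1 =
              powerRZ (-1) k * (N D m - Lam * N D (m - p)%nat)).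
    { unfold hfun. rewrite T0.
      rewrite (RInt_ext _ (fun x => powerRZ (-1) k * (z x * Lop p Lam D m x)))
        by (intros; toR; ring).
      rewrite RInt_sc.
      - rewrite intzL with (p := p) (n := n) (z := z); auto; lia.
      - apply cw_ex; try lra. apply cw_mult; auto. apply (cwL p n Lam z D); auto; lia. }
    rewrite V1, V0. fold mu.
    replace (powerRZ (-1) (k - 1) * (powerRZ (-1) (k - 1) * (N D (S m) - Lam * N D (S m - p)%nat)))
      with ((powerRZ (-1) (k - 1) * powerRZ (-1) (k - 1)) * (N D (S m) - Lam * N D (S m - p)%nat)) by ring.
    replace (powerRZ (-1) k * mu * (powerRZ (-1) k * (N D m - Lam * N D (m - p)%nat)))
      with ((powerRZ (-1) k * powerRZ (-1) k) * mu * (N D m - Lam * N D (m - p)%nat)) by ring.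
    rewrite !pRZ_sq. assert (K := Key m Hm1 Hm2). lra.
  - intros c Hc.
    exists (ex_RInt_Reals_0 _ _ _ (cw_ex _ (-1) 1 ltac:(lra) ltac:(lra) ltac:(lra) Hz)).
    rewrite <- RInt_Reals.
    assert (K := Key (n-1)%nat ltac:(lia) ltac:(lia)).
    replace (S (n-1)) with n in K by lia.
    rewrite (In0 p n Lam z D Hn He) in K.
    rewrite <- (intzL p n Lam z D (n-1)) in K by (auto; lia).
    rewrite (RInt_ext _ (fun x => c * z x)) in K.
    + rewrite RInt_sc in K by (apply cw_ex; auto; lra).
      assert (mu * (c * RInt z (-1) 1) < 0) by lra.
      destruct (Rlt_or_le (c * RInt z (-1) 1) 0) as [|Hge]; auto.
      assert (0 <= mu * (c * RInt z (-1) 1)) by (apply Rmult_le_pos; lra). lra.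
    + intros x Hx. rewrite Rmin_left in Hx by lra. rewrite Rmax_right in Hx by lra.
      rewrite Hc by lra. toR; ring.
Qed.
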